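(* Let $\Sigma$ be a finite alphabet, $n$ a positive integer and $\varphi\in\mathrm{FO}^2_n[<]$ a unique position formula. Let $u\in\Sigma^\star$ and $i\in[1,|u|]$ with $(u,i)\models\varphi$. Then $i=r(u)$ for some ranker $r\in R_n^\star$.
   Context: Words are finite structures with universe $\{1,\dots,|w|\}$, unary predicates $Q_a$ ($a\in\Sigma$) marking positions carrying $a$, and the order $<$. $\mathrm{FO}^2_n[<]$ is first-order logic over this signature using only the variables $x,y$, with quantifier depth at most $n$; $(w,i)$ denotes $w$ with $x$ interpreted as $i$. A formula $\varphi\in\mathrm{FO}^2[<]$ with free variable $x$ is a unique position formula if for every $w\in\Sigma^\star$ there is at most one $i\in[1,|w|]$ with $(w,i)\models\varphi$. Boundary positions: $\triangleright_a(w)=\min\{i:w_i=a\}$, $\triangleleft_a(w)=\max\{i:w_i=a\}$, $\triangleright_a(w,q)=\min\{i\in[q+1,|w|]:w_i=a\}$, $\triangleleft_a(w,q)=\max\{i\in[1,q-1]:w_i=a\}$ (undefined if empty). An $n$-ranker is a sequence $r=(p_1,\dots,p_n)$ of boundary positions with $r(w)=p_1(w)$ if $n=1$, undefined if $(p_1,\dots,p_{n-1})(w)$ is undefined, else $p_n(w,(p_1,\dots,p_{n-1})(w))$. $R_n^\star$ is the set of all $j$-rankers with $j\in[1,n]$. *)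

(* Defs.v *)
From mathcomp Require Import all_boot.
Set Implicit Arguments. Unset Strict Implicit. Unset Printing Implicit Defensive.

Section Words.
Variable Sigma : finType.

(** letter carried at (1-based) position i, None if out of range *)
Definition letter (w : seq Sigma) (i : nat) : option Sigma :=
  nth None (map Some w) i.-1.

Definition apos (w : seq Sigma) (a : Sigma) : seq nat :=
  [seq i <- iota 1 (size w) | letter w i == Some a].

Inductive var := VX | VY.
Definition var_eqb (u v : var) : bool :=
  match u, v with VX, VX | VY, VY => true | _, _ => false end.

Inductive form :=
| FTrue
| FFalse
| FLetter of Sigma & var
| FLt of var & var
| FEq of var & var
| FNot of form
| FAnd of form & form
| FOr of form & form
| FEx of var & form
| FAll of var & form.

Fixpoint qdepth (f : form) : nat :=
  match f with
  | FNot g => qdepth g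
  | FAnd g h | FOr g h => maxn (qdepth g) (qdepth h)
  | FEx _ g | FAll _ g => (qdepth g).+1
  | _ => 0
  end.

Fixpoint free (v : var) (f : form) : bool :=
  match f with
  | FTrue | FFalse => false
  | FLetter _ u => var_eqb u v
  | FLt u1 u2 | FEq u1 u2 => var_eqb u1 v || var_eqb u2 v
  | FNot g => free v g
  | FAnd g h | FOr g h => free v g || free v h
  | FEx u g | FAll u g => ~~ var_eqb u v && free v g
  end.

Definition upd (e : var -> nat) (v : var) (j : nat) : var -> nat :=
  fun u => if var_eqb u v then j else e u.

Fixpoint sat (w : seq Sigma) (e : var -> nat) (f : form) : Prop :=
  match f with
  | FTrue => True
  | FFalse => False
  | FLetter a v => letter w (e v) = Some a
  | FLt u v => e u < e v
  | FEq u v => e u = e v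
  | FNot g => ~ sat w e g
  | FAnd g h => sat w e g /\ sat w e h
  | FOr g h => sat w e g \/ sat w e h
  | FEx v g => exists j, 1 <= j <= size w /\ sat w (upd e v j) g
  | FAll v g => forall j, 1 <= j <= size w -> sat w (upd e v j) g
  end.

(** (w,i) |= f : x interpreted as i (y is also set to i; irrelevant when
    y is not free in f) *)
Definition models (w : seq Sigma) (i : nat) (f : form) : Prop :=
  sat w (fun _ => i) f.

Definition only_x_free (f : form) : Prop := free VY f = false.

Definition unique_position (f : form) : Prop :=
  only_x_free f /\
  forall (w : seq Sigma) (i j : nat),
    1 <= i <= size w -> 1 <= j <= size w ->
    models w i f -> models w j f -> i = j.

(** (true, a) stands for |>_a (leftmost), (false, a) for <|_a (rightmost) *)
Definition bpos := (bool * Sigma)%type.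

Definition bpos_abs (p : bpos) (w : seq Sigma) : option nat :=
  let ps := apos w p.2 in
  if p.1 then ohead ps else ohead (rev ps).

Definition bpos_rel (p : bpos) (w : seq Sigma) (q : nat) : option nat :=
  if p.1 then ohead [seq i <- apos w p.2 | q < i]
  else ohead (rev [seq i <- apos w p.2 | i < q]).

(** an n-ranker (p_1, ..., p_n) is represented as (p_1, [:: p_2; ...; p_n]) *)
Definition ranker := (bpos * seq bpos)%type.

Definition ranker_len (r : ranker) : nat := (size r.2).+1.

Definition ranker_eval (r : ranker) (w : seq Sigma) : option nat :=
  foldl (fun (o : option nat) p =>
           match o with Some q => bpos_rel p w q | None => None end)
        (bpos_abs r.1 w) r.2.

End Words.

(* Main.v *)
Require Import Defs.
From mathcomp Require Import all_boot zify.
From Stdlib Require Import Classical.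
Set Implicit Arguments. Unset Strict Implicit.

Definition cmpn (a b : nat) : bool * bool := (a < b, b < a).

Fixpoint eqv (Sigma : finType) (k : nat) (w v : seq Sigma) (p q : nat) : Prop :=
  match k with
  | 0 => letter w p = letter v q
  | k'.+1 => letter w p = letter v q /\
    (forall p2, 1 <= p2 <= size w -> exists q2, 1 <= q2 <= size v /\
        cmpn p2 p = cmpn q2 q /\ eqv k' w v p2 q2) /\
    (forall q2, 1 <= q2 <= size v -> exists p2, 1 <= p2 <= size w /\
        cmpn p2 p = cmpn q2 q /\ eqv k' w v p2 q2)
  end.

Lemma eqv_letter (Sigma : finType) k (w v : seq Sigma) p q :
  eqv k w v p q -> letter w p = letter v q.
Proof. by case: k => [|k] //= [-> _]. Qed.

Lemma eqv_mono (Sigma : finType) k (w v : seq Sigma) p q :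
  eqv k.+1 w v p q -> eqv k w v p q.
Proof.
elim: k p q => [|k IH] p q /=; first by case.
move=> [Hl [Hf Hb]]; split => //; split.
- move=> p2 /Hf [q2 [Hq2 [Hc He]]]; exists q2; split => //; split => //; exact: IH.
- move=> q2 /Hb [p2 [Hp2 [Hc He]]]; exists p2; split => //; split => //; exact: IH.
Qed.

Lemma cmpn_swap a b c d : cmpn a b = cmpn c d -> cmpn b a = cmpn d c.
Proof. by rewrite /cmpn => -[-> ->]. Qed.

Lemma cmpn_lt a b c d : cmpn a b = cmpn c d -> (a < b) = (c < d).
Proof. by rewrite /cmpn => -[-> _]. Qed.

Lemma cmpn_eq a b c d : cmpn a b = cmpn c d -> (a = b <-> c = d).
Proof. rewrite /cmpn => -[H1 H2].
by case: (ltngtP a b) H1 H2; case: (ltngtP c d) => // H3 H4 H5 H6; split => // H; subst; rewrite ltnn in H3 H4 H5 H6 *.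
Qed.

Lemma sound (Sigma : finType) (f : form Sigma) : forall k (w v : seq Sigma) e e',
  qdepth f <= k ->
  (forall x, 1 <= e x <= size w) -> (forall x, 1 <= e' x <= size v) ->
  eqv k w v (e VX) (e' VX) -> eqv k w v (e VY) (e' VY) ->
  cmpn (e VX) (e VY) = cmpn (e' VX) (e' VY) ->
  (sat w e f <-> sat v e' f).
Proof.
elim: f => [||a x|x y|x y|g IH|g IHg h IHh|g IHg h IHh|x g IH|x g IH] k w v e e' Hd He He' HX HY Hc /=.
- by [].
- by [].
- clear Hd; case: x; [rewrite (eqv_letter HX) | rewrite (eqv_letter HY)]; by [].
- clear Hd; case: x; case: y.
  + by rewrite !ltnn.
  + by rewrite (cmpn_lt Hc).
  + by rewrite (cmpn_lt (cmpn_swap Hc)).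
  + by rewrite !ltnn.
- clear Hd; case: x; case: y; try by [].
  + exact: cmpn_eq Hc.
  + by split => H; apply/esym; apply/(cmpn_eq Hc).
- by rewrite (IH k w v e e').
- move: Hd => /= Hd.
  rewrite (IHg k w v e e') ?(IHh k w v e e') //; lia.
- move: Hd => /= Hd.
  rewrite (IHg k w v e e') ?(IHh k w v e e') //; lia.
- case: k Hd HX HY => [//|k] /= Hd HX HY.
  have HX' := eqv_mono HX; have HY' := eqv_mono HY.
  case: x.
  + case: HY => _ [Hf Hb]; split.
    * move=> [j [Hj Hs]]; case: (Hf j Hj) => [j' [Hj' [Hcj Hej]]].
      exists j'; split => //.
      have R1 : forall x, 0 < upd e VX j x <= size w by case; rewrite /upd /= ?Hj ?He.
      have R2 : forall x, 0 < upd e' VX j' x <= size v by case; rewrite /upd /= ?Hj' ?He'.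
      by apply/(IH k w v (upd e VX j) (upd e' VX j') Hd R1 R2 Hej HY' Hcj).
    * move=> [j' [Hj' Hs]]; case: (Hb j' Hj') => [j [Hj [Hcj Hej]]].
      exists j; split => //.
      have R1 : forall x, 0 < upd e VX j x <= size w by case; rewrite /upd /= ?Hj ?He.
      have R2 : forall x, 0 < upd e' VX j' x <= size v by case; rewrite /upd /= ?Hj' ?He'.
      by apply/(IH k w v (upd e VX j) (upd e' VX j') Hd R1 R2 Hej HY' Hcj).
  + case: HX => _ [Hf Hb]; split.
    * move=> [j [Hj Hs]]; case: (Hf j Hj) => [j' [Hj' [Hcj Hej]]].
      exists j'; split => //.
      have R1 : forall x, 0 < upd e VY j x <= size w by case; rewrite /upd /= ?Hj ?He.
      have R2 : forall x, 0 < upd e' VY j' x <= size v by case; rewrite /upd /= ?Hj' ?He'.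
      by apply/(IH k w v (upd e VY j) (upd e' VY j') Hd R1 R2 HX' Hej (cmpn_swap Hcj)).
    * move=> [j' [Hj' Hs]]; case: (Hb j' Hj') => [j [Hj [Hcj Hej]]].
      exists j; split => //.
      have R1 : forall x, 0 < upd e VY j x <= size w by case; rewrite /upd /= ?Hj ?He.
      have R2 : forall x, 0 < upd e' VY j' x <= size v by case; rewrite /upd /= ?Hj' ?He'.
      by apply/(IH k w v (upd e VY j) (upd e' VY j') Hd R1 R2 HX' Hej (cmpn_swap Hcj)).
- case: k Hd HX HY => [//|k] /= Hd HX HY.
  have HX' := eqv_mono HX; have HY' := eqv_mono HY.
  case: x.
  + case: HY => _ [Hf Hb]; split.
    * move=> Hs j' Hj'; case: (Hb j' Hj') => [j [Hj [Hcj Hej]]].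
      have R1 : forall x, 0 < upd e VX j x <= size w by case; rewrite /upd /= ?Hj ?He.
      have R2 : forall x, 0 < upd e' VX j' x <= size v by case; rewrite /upd /= ?Hj' ?He'.
      by apply/(IH k w v (upd e VX j) (upd e' VX j') Hd R1 R2 Hej HY' Hcj); apply: Hs.
    * move=> Hs j Hj; case: (Hf j Hj) => [j' [Hj' [Hcj Hej]]].
      have R1 : forall x, 0 < upd e VX j x <= size w by case; rewrite /upd /= ?Hj ?He.
      have R2 : forall x, 0 < upd e' VX j' x <= size v by case; rewrite /upd /= ?Hj' ?He'.
      by apply/(IH k w v (upd e VX j) (upd e' VX j') Hd R1 R2 Hej HY' Hcj); apply: Hs.
  + case: HX => _ [Hf Hb]; split.
    * move=> Hs j' Hj'; case: (Hb j' Hj') => [j [Hj [Hcj Hej]]].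
      have R1 : forall x, 0 < upd e VY j x <= size w by case; rewrite /upd /= ?Hj ?He.
      have R2 : forall x, 0 < upd e' VY j' x <= size v by case; rewrite /upd /= ?Hj' ?He'.
      by apply/(IH k w v (upd e VY j) (upd e' VY j') Hd R1 R2 HX' Hej (cmpn_swap Hcj)); apply: Hs.
    * move=> Hs j Hj; case: (Hf j Hj) => [j' [Hj' [Hcj Hej]]].
      have R1 : forall x, 0 < upd e VY j x <= size w by case; rewrite /upd /= ?Hj ?He.
      have R2 : forall x, 0 < upd e' VY j' x <= size v by case; rewrite /upd /= ?Hj' ?He'.
      by apply/(IH k w v (upd e VY j) (upd e' VY j') Hd R1 R2 HX' Hej (cmpn_swap Hcj)); apply: Hs.
Qed.

Lemma cmpn_iff a b c d : cmpn a b = cmpn c d <-> (((a<b) <-> (c<d)) /\ ((b<a) <-> (d<c))).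
Proof.
split.
- by rewrite /cmpn => -[-> ->].
- move=> [H1 H2]; rewrite /cmpn; congr pair; apply/idP/idP; by [move/H1|move/H2].
Qed.

Lemma ohead_filter_iota (P : pred nat) m x : 1 <= x <= m -> P x ->
  (forall y, 1 <= y < x -> ~~ P y) -> ohead (filter P (iota 1 m)) = Some x.
Proof.
move=> Hx Px Hy.
have -> : m = x.-1 + (m - x.-1) by lia.
rewrite iotaD filter_cat.
have -> : [seq y <- iota 1 x.-1 | P y] = [::].
  apply/eqP; rewrite -[_ == _]negbK -has_filter; apply/hasPn => y.
  rewrite mem_iota => Hy'; apply: Hy; lia.
have -> : m - x.-1 = (m - x).+1 by lia.
have -> : 1 + x.-1 = x by lia.
by rewrite /= Px.
Qed.

Lemma ohead_rev_filter_iota (P : pred nat) m x : 1 <= x <= m -> P x ->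
  (forall y, x < y <= m -> ~~ P y) -> ohead (rev (filter P (iota 1 m))) = Some x.
Proof.
move=> Hx Px Hy.
have -> : m = (x.-1 + 1) + (m - x) by lia.
rewrite iotaD filter_cat.
have -> : [seq y <- iota (1 + (x.-1 + 1)) (m - x) | P y] = [::].
  apply/eqP; rewrite -[_ == _]negbK -has_filter; apply/hasPn => y.
  rewrite mem_iota => Hy'; apply: Hy; lia.
rewrite iotaD filter_cat cats0.
have -> : 1 + x.-1 = x by lia.
by rewrite /= Px rev_cat /=.
Qed.

Lemma letter_some (Sigma : finType) (w : seq Sigma) p :
  1 <= p <= size w -> exists b, letter w p = Some b.
Proof.
move=> /andP [H0 H]; rewrite /letter; case: p H0 H => [//|p] _ /= H.
move: H.
elim: w p => [|a w IH] [|p] //=.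
- by exists a.
- by move=> H; apply: IH.
Qed.

Lemma bpos_rel_next (Sigma : finType) (w : seq Sigma) b d x :
  d < x <= size w -> letter w x = Some b ->
  (forall y, d < y < x -> letter w y <> Some b) ->
  bpos_rel (true, b) w d = Some x.
Proof.
move=> Hx Lx Hy; rewrite /bpos_rel /= /apos -filter_predI.
apply: ohead_filter_iota.
- lia.
- by rewrite /= Lx eqxx; case/andP: Hx => ->.
- move=> y Hy'; rewrite /= negb_and; case: (ltnP d y) => //= Hdy.
  by apply/eqP; apply: Hy; lia.
Qed.

Lemma bpos_rel_prev (Sigma : finType) (w : seq Sigma) b d x :
  1 <= x -> x < d -> x <= size w -> letter w x = Some b ->
  (forall y, x < y < d -> letter w y <> Some b) ->
  bpos_rel (false, b) w d = Some x.
Proof.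
move=> H1 Hx Hxs Lx Hy; rewrite /bpos_rel /= /apos -filter_predI.
apply: ohead_rev_filter_iota.
- lia.
- by rewrite /= Lx eqxx Hx.
- move=> y Hy'; rewrite /= negb_and; case: (ltnP y d) => //= Hdy.
  by apply/eqP; apply: Hy; lia.
Qed.

Definition Dk (Sigma : finType) (w : seq Sigma) k d :=
  exists r : ranker Sigma, ranker_len r <= k /\ ranker_eval r w = Some d.

Lemma Dk_mono (Sigma : finType) (w : seq Sigma) k k' d :
  k <= k' -> Dk w k d -> Dk w k' d.
Proof. move=> H [r [H1 H2]]; exists r; split => //; lia. Qed.

Lemma Dk0 (Sigma : finType) (w : seq Sigma) d : ~ Dk w 0 d.
Proof. by move=> [r []]. Qed.

Lemma Dk_first (Sigma : finType) (w : seq Sigma) k b x :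
  1 <= k -> 1 <= x <= size w -> letter w x = Some b ->
  (forall y, 1 <= y < x -> letter w y <> Some b) -> Dk w k x.
Proof.
move=> Hk Hx Lx Hy; exists ((true, b), [::]); split => //.
rewrite /ranker_eval /= /bpos_abs /= /apos; apply: ohead_filter_iota => //.
- by rewrite /= Lx.
- by move=> y /Hy /eqP.
Qed.

Lemma Dk_last (Sigma : finType) (w : seq Sigma) k b x :
  1 <= k -> 1 <= x <= size w -> letter w x = Some b ->
  (forall y, x < y <= size w -> letter w y <> Some b) -> Dk w k x.
Proof.
move=> Hk Hx Lx Hy; exists ((false, b), [::]); split => //.
rewrite /ranker_eval /= /bpos_abs /= /apos; apply: ohead_rev_filter_iota => //.
- by rewrite /= Lx.
- by move=> y /Hy /eqP.
Qed.

Lemma Dk_ext (Sigma : finType) (w : seq Sigma) k d p x :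
  Dk w k d -> bpos_rel p w d = Some x -> Dk w k.+1 x.
Proof.
move=> [[p1 s] [H1 H2]] H3; exists (p1, rcons s p); split.
- by rewrite /ranker_len /= size_rcons; move: H1; rewrite /ranker_len /=.
- by rewrite /ranker_eval /= foldl_rcons; move: H2; rewrite /ranker_eval /= => ->.
Qed.

Lemma right_ext (Sigma : finType) (w : seq Sigma) k b p2 :
  1 <= p2 <= size w -> letter w p2 = Some b -> ~ Dk w k p2 ->
  exists e, p2 <= e <= size w /\ letter w e = Some b /\ Dk w k.+1 e /\
    (forall d, Dk w k d -> ~ (p2 <= d <= e)).
Proof.
move=> Hp Lp ND.
suff: forall t x, size w - x <= t -> p2 <= x <= size w -> letter w x = Some b ->
  (forall d, Dk w k d -> ~ (p2 <= d <= x)) ->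
  exists e, p2 <= e <= size w /\ letter w e = Some b /\ Dk w k.+1 e /\
    (forall d, Dk w k d -> ~ (p2 <= d <= e)).
  move=> H; apply: (H (size w - p2) p2) => //; first lia.
  move=> d Hd Hr; have Ed : d = p2 by lia.
  by subst.
elim=> [|t IH] x Ht Hx Lx Hn.
all: case: (classic (exists y, x < y <= size w /\ letter w y = Some b)) => [Ey|NEy].
- case: Ey => y [Hy _]; lia.
- exists x; split => //; split => //; split => //.
  apply: (Dk_last (b:=b)) => //; first lia.
  by move=> y Hy Ly; apply: NEy; exists y.
- have Ey' : exists y, (x < y <= size w) && (letter w y == Some b).
    by case: Ey => y [H1 H2]; exists y; rewrite H1 H2 eqxx.
  case: (ex_minnP Ey') => y /andP [Hy /eqP Ly] Hmin.
  case: (classic (exists d, Dk w k d /\ x < d <= y)) => [[d [Dd Hd]]|ND2].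
  + exists x; split => //; split => //; split => //.
    apply: (Dk_ext (d:=d) (p:=(false,b))) => //.
    apply: bpos_rel_prev => //; try lia.
    move=> z Hz Lz.
    have : y <= z by apply: Hmin; rewrite Lz eqxx andbT; lia.
    lia.
  + apply: (IH y) => //; try lia.
    move=> d Dd Hd.
    case: (leqP d x) => Hdx.
    * by apply: (Hn d Dd); lia.
    * by apply: ND2; exists d; split => //; lia.
- exists x; split => //; split => //; split => //.
  apply: (Dk_last (b:=b)) => //; first lia.
  by move=> y Hy Ly; apply: NEy; exists y.
Qed.

Lemma left_ext (Sigma : finType) (w : seq Sigma) k b p2 :
  1 <= p2 <= size w -> letter w p2 = Some b -> ~ Dk w k p2 ->
  exists e, 1 <= e <= p2 /\ letter w e = Some b /\ Dk w k.+1 e /\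
    (forall d, Dk w k d -> ~ (e <= d <= p2)).
Proof.
move=> Hp Lp ND.
suff: forall t x, x <= t -> 1 <= x <= p2 -> letter w x = Some b ->
  (forall d, Dk w k d -> ~ (x <= d <= p2)) ->
  exists e, 1 <= e <= p2 /\ letter w e = Some b /\ Dk w k.+1 e /\
    (forall d, Dk w k d -> ~ (e <= d <= p2)).
  move=> H; apply: (H p2 p2) => //; first lia.
  move=> d Hd Hr; have Ed : d = p2 by lia.
  by subst.
elim=> [|t IH] x Ht Hx Lx Hn.
all: case: (classic (exists y, 1 <= y < x /\ letter w y = Some b)) => [Ey|NEy].
- case: Ey => y [Hy _]; lia.
- exists x; split => //; split => //; split => //.
  apply: (Dk_first (b:=b)) => //; first lia.
  by move=> y Hy Ly; apply: NEy; exists y.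
- have Ey' : exists y, (1 <= y < x) && (letter w y == Some b).
    by case: Ey => y [H1 H2]; exists y; rewrite H1 H2 eqxx.
  have Ub : forall y, (1 <= y < x) && (letter w y == Some b) -> y <= x.
    by move=> y /andP [Hy _]; lia.
  case: (ex_maxnP Ey' Ub) => y /andP [Hy /eqP Ly] Hmax.
  case: (classic (exists d, Dk w k d /\ y <= d < x)) => [[d [Dd Hd]]|ND2].
  + exists x; split => //; split => //; split => //.
    apply: (Dk_ext (d:=d) (p:=(true,b))) => //.
    apply: bpos_rel_next => //; try lia.
    move=> z Hz Lz.
    have : z <= y by apply: Hmax; rewrite Lz eqxx andbT; lia.
    lia.
  + apply: (IH y) => //; try lia.
    move=> d Dd Hd.
    case: (leqP x d) => Hdx.
    * by apply: (Hn d Dd); lia.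
    * by apply: ND2; exists d; split => //; lia.
- exists x; split => //; split => //; split => //.
  apply: (Dk_first (b:=b)) => //; first lia.
  by move=> y Hy Ly; apply: NEy; exists y.
Qed.

Definition dup (Sigma : finType) (w : seq Sigma) i := take i w ++ drop i.-1 w.
Definition fD i d := if d <= i then d else d.+1.
Definition gD i q := if q <= i then q else q.-1.

Lemma size_dup (Sigma : finType) (w : seq Sigma) i :
  1 <= i <= size w -> size (dup w i) = (size w).+1.
Proof. move=> H; rewrite /dup size_cat size_takel ?size_drop; lia. Qed.

Lemma letter_dup (Sigma : finType) (w : seq Sigma) i q :
  1 <= i <= size w -> 1 <= q <= (size w).+1 ->
  letter (dup w i) q = letter w (gD i q).
Proof.
move=> Hi Hq; rewrite /letter /dup map_cat nth_cat size_map size_takel; last lia.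
rewrite /gD; case: ifP => Hlt.
- rewrite map_take nth_take //; case: ifP => //; lia.
- rewrite map_drop nth_drop; case: ifP => H2; first lia.
  congr nth; lia.
Qed.

Lemma L1 i q d : gD i q < d -> q < fD i d.
Proof. rewrite /gD /fD; case: ifP; case: ifP; lia. Qed.
Lemma L2 i q d : d < gD i q -> fD i d < q.
Proof. rewrite /gD /fD; case: ifP; case: ifP; lia. Qed.
Lemma L3 i q : q <> fD i (gD i q) -> gD i q = i.
Proof. rewrite /gD /fD; case: (leqP q i) => H1 /=; try case: ifP; lia. Qed.
Lemma L4 i d : gD i (fD i d) = d.
Proof. rewrite /gD /fD; case: (leqP d i) => H1 /=; try case: ifP; lia. Qed.
Lemma L5 i a b : cmpn (fD i a) (fD i b) = cmpn a b.
Proof. apply/cmpn_iff; rewrite /fD; case: ifP; case: ifP; lia. Qed.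
Lemma L6 i m d : 1 <= d <= m -> 1 <= fD i d <= m.+1.
Proof. rewrite /fD; case: ifP; lia. Qed.
Lemma L7 i m q : 1 <= i <= m -> 1 <= q <= m.+1 -> 1 <= gD i q <= m.
Proof. rewrite /gD; case: ifP; lia. Qed.

Lemma bisim (Sigma : finType) (w : seq Sigma) i K :
  1 <= i <= size w -> ~ Dk w K i ->
  forall k, k <= K -> forall p q, 1 <= p <= size w -> 1 <= q <= (size w).+1 ->
  letter w p = letter (dup w i) q ->
  (forall d, Dk w k d -> cmpn p d = cmpn q (fD i d)) ->
  eqv k w (dup w i) p q.
Proof.
move=> Hi NDi; elim=> [|k IH] Hk p q Hp Hq Hl Hc /=; first done.
have Hc' : forall d, Dk w k d -> cmpn p d = cmpn q (fD i d).
  by move=> d Hd; apply: Hc; apply: Dk_mono Hd.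
have NDk : forall d, Dk w k.+1 d -> d <> i.
  by move=> d Hd E; subst; apply: NDi; apply: Dk_mono Hd.
have Hk' : k <= K by lia.
rewrite size_dup //.
split => //; split.
- move=> p2 Hp2; case: (classic (Dk w k p2)) => Dp2.
  + exists (fD i p2); split; first exact: L6.
    split; first by apply: cmpn_swap; apply: Hc; apply: Dk_mono Dp2.
    apply: IH => //; first exact: L6.
    * by rewrite letter_dup ?L4 //; apply: L6.
    * by move=> d _; rewrite L5.
  + case: (letter_some Hp2) => b Lb.
    case: (ltngtP p p2) => Hpp.
    * case: (right_ext Hp2 Lb Dp2) => e [He [Le [De Hne]]].
      have He2 : 1 <= e <= size w by lia.
      exists (fD i e); split; first exact: L6.
      have := Hc e De; move/cmpn_iff => Hce.
      split; first by apply/cmpn_iff; lia.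
      apply: IH => //; first exact: L6.
      * by rewrite letter_dup ?L4 ?Le //; apply: L6.
      * move=> d Dd; rewrite L5; have := Hne d Dd => Hn; apply/cmpn_iff; lia.
    * case: (left_ext Hp2 Lb Dp2) => e [He [Le [De Hne]]].
      have He2 : 1 <= e <= size w by lia.
      exists (fD i e); split; first exact: L6.
      have := Hc e De; move/cmpn_iff => Hce.
      split; first by apply/cmpn_iff; lia.
      apply: IH => //; first exact: L6.
      * by rewrite letter_dup ?L4 ?Le //; apply: L6.
      * move=> d Dd; rewrite L5; have := Hne d Dd => Hn; apply/cmpn_iff; lia.
    * subst p2; exists q; split => //; split; first by rewrite /cmpn !ltnn.
      exact: IH.
- move=> q2 Hq2.
  have Hx := L7 Hi Hq2.
  have Lq2 := letter_dup Hi Hq2.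
  case: (classic (Dk w k (gD i q2) /\ q2 = fD i (gD i q2))) => [[Dx Eq]|NDx].
  + exists (gD i q2); split => //; split.
    * by rewrite {2}Eq; apply: cmpn_swap; apply: Hc; apply: Dk_mono Dx.
    * apply: IH => //.
      by move=> d _; rewrite [in RHS]Eq L5.
  + have Dx : ~ Dk w k (gD i q2).
      move=> Dx; apply: NDx; split => //.
      apply: NNPP => Ne; have := L3 Ne => Ei.
      by apply: (NDk (gD i q2)) => //; apply: Dk_mono Dx.
    have Eqx : Dk w k.+1 (gD i q2) -> q2 = fD i (gD i q2).
      move=> Dx1; apply: NNPP => Ne; have := L3 Ne => Ei.
      exact: (NDk _ Dx1 Ei).
    case: (letter_some Hx) => b Lb.
    case: (ltngtP q q2) => Hqq.
    * case: (right_ext Hx Lb Dx) => e [He [Le [De Hne]]].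
      have He2 : 1 <= e <= size w by lia.
      have Hq2e : q2 <= fD i e.
        case: (ltngtP (gD i q2) e) => Hxe; first by apply: ltnW; apply: L1.
        - lia.
        - by rewrite {1}(Eqx _) Hxe // -Hxe.
      exists e; split => //.
      have := Hc e De; move/cmpn_iff => Hce.
      split; first by apply/cmpn_iff; lia.
      apply: IH => //; try by rewrite Lq2 Le Lb.
      move=> d Dd; have := Hne d Dd => Hn.
      case: (ltnP d (gD i q2)) => Hdx.
      - have := L2 Hdx => H; apply/cmpn_iff; lia.
      - have Hed : e < d by lia.
        have : gD i q2 < d by lia.
        move/L1 => H; apply/cmpn_iff; lia.
    * case: (left_ext Hx Lb Dx) => e [He [Le [De Hne]]].
      have He2 : 1 <= e <= size w by lia.
      have Hq2e : fD i e <= q2.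
        case: (ltngtP e (gD i q2)) => Hxe; first by apply: ltnW; apply: L2.
        - lia.
        - by rewrite Hxe -(Eqx _) // -Hxe.
      exists e; split => //.
      have := Hc e De; move/cmpn_iff => Hce.
      split; first by apply/cmpn_iff; lia.
      apply: IH => //; try by rewrite Lq2 Le Lb.
      move=> d Dd; have := Hne d Dd => Hn.
      case: (ltnP (gD i q2) d) => Hdx.
      - have := L1 Hdx => H; apply/cmpn_iff; lia.
      - have Hed : d < e by lia.
        have : d < gD i q2 by lia.
        move/L2 => H; apply/cmpn_iff; lia.
    * subst q2; exists p; split => //; split; first by rewrite /cmpn !ltnn.
      exact: IH.
Qed.

Theorem lemma3p11 (Sigma : finType) (n : nat) (phi : form Sigma) :
  0 < n -> qdepth phi <= n -> unique_position phi ->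
  forall (u : seq Sigma) (i : nat), 1 <= i <= size u -> models u i phi ->
  exists r : ranker Sigma, 1 <= ranker_len r <= n /\ ranker_eval r u = Some i.
Proof.
move=> _ Hd [_ Huniq] u i Hi Hm.
apply: NNPP => Hno.
have NDi : ~ Dk u n i.
  by move=> [r [Hr He]]; apply: Hno; exists r; split.
have Hcmp : forall j, j = i \/ j = i.+1 -> forall d, Dk u n d -> cmpn i d = cmpn j (fD i d).
  move=> j Hj d Dd; have Hdi : d <> i by move=> E; subst.
  apply/cmpn_iff; rewrite /fD; case: ifP; lia.
have Hsz := size_dup Hi.
have E1 : eqv n u (dup u i) i i.
  apply: (bisim Hi NDi) => //; first lia.
  - by rewrite letter_dup ?/gD ?leqnn //; lia.
  - by apply: Hcmp; left.
have E2 : eqv n u (dup u i) i i.+1.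
  apply: (bisim Hi NDi) => //; first lia.
  - by rewrite letter_dup /gD ?ltnn //=; lia.
  - by apply: Hcmp; right.
have S : forall j, eqv n u (dup u i) i j -> 1 <= j <= size (dup u i) -> models (dup u i) j phi.
  move=> j Ej Hj; rewrite /models.
  have R1 : forall x : var, 1 <= (fun _ => i) x <= size u by move=> _; exact: Hi.
  have R2 : forall x : var, 1 <= (fun _ => j) x <= size (dup u i) by move=> _; exact: Hj.
  have Hc : cmpn i i = cmpn j j by rewrite /cmpn !ltnn.
  exact: (proj1 (@sound Sigma phi n u (dup u i) (fun _ => i) (fun _ => j) Hd R1 R2 Ej Ej Hc) Hm).
have Hr1 : 1 <= i <= size (dup u i) by rewrite Hsz; lia.
have Hr2 : 1 <= i.+1 <= size (dup u i) by rewrite Hsz; lia.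
have := Huniq (dup u i) i i.+1 Hr1 Hr2 (S i E1 Hr1) (S i.+1 E2 Hr2).
by move/n_Sn.
Qed.
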